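(* Let $X$ be a set, $\mathcal{F}\subseteq\mathcal{P}(X)$ a field, $\mathcal{E}\subseteq\mathcal{F}$ an arbitrary subset, and $(\mu^+,\mu^-)$ a conjugate pair of set functions on $\mathcal{F}$ such that $\mu^+(A)=\mu^-(A)$ for all $A\in\mathcal{E}$. Then the pseudometric space $(\mathcal{E}, d_{\mu^+})$ is complete if and only if the following condition holds: for every sequence $(A_i)_{i\in\mathbb{N}}$ in $\mathcal{E}$ such that the nets $\{\mu^+(\bigcup_{k=i}^j A_k): i,j\in\mathbb{N}, i\le j\}$ and $\{\mu^-(\bigcup_{k=i}^j A_k): i,j\in\mathbb{N}, i\le j\}$ converge to a common limit $L$, the net $\{\bigcup_{k=i}^j A_k: i,j\in\mathbb{N}, i\le j\}$ converges in $d_{\mu^+}$ to some $A\in\mathcal{E}$ with $\mu^+(A)=L$.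
   Context: A field is a family of subsets of $X$ containing $\emptyset$ and closed under complements and finite unions. $I_A$ denotes the indicator function of $A$. Consider $\mu^+,\mu^-:\mathcal{F}\to[0,1]$ with $\mu^\pm(\emptyset)=0$ and $\mu^\pm(X)=1$. $\mu^+$ is subadditive if $I_A\le I_B+I_C\implies \mu^+(A)\le\mu^+(B)+\mu^+(C)$; $\mu^-$ is superadditive if $I_A\ge I_B+I_C\implies\mu^-(A)\ge\mu^-(B)+\mu^-(C)$; $\mu^-$ is co-subadditive with respect to $\mu^+$ if $I_A\le I_B+I_C\implies\mu^-(A)\le\mu^-(B)+\mu^+(C)$; $\mu^+$ is co-superadditive with respect to $\mu^-$ if $I_A\ge I_B+I_C\implies\mu^+(A)\ge\mu^+(B)+\mu^-(C)$ (all for $A,B,C\in\mathcal{F}$). The pair $(\mu^+,\mu^-)$ is conjugate if all four properties hold. For subadditive $\mu^+$, $d_{\mu^+}(A,B):=\mu^+(A\triangle B)$ is a pseudometric on $\mathcal{F}$ (restricted to $\mathcal{E}$ here). The index set $\{(i,j): i\le j\}$ is directed by the product order $(i,j)\le(k,l)\iff i\le k$ and $j\le l$. *)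

(* Defs.v *)
From Stdlib Require Import Reals Lra Lia Classical ClassicalEpsilon.
Open Scope R_scope.


Definition ind {X : Type} (A : X -> Prop) (x : X) : R :=
  if excluded_middle_informative (A x) then 1 else 0.

Definition emptyset {X : Type} : X -> Prop := fun _ => False.
Definition fullset {X : Type} : X -> Prop := fun _ => True.
Definition compl {X : Type} (A : X -> Prop) : X -> Prop := fun x => ~ A x.
Definition union {X : Type} (A B : X -> Prop) : X -> Prop := fun x => A x \/ B x.
Definition symdiff {X : Type} (A B : X -> Prop) : X -> Prop :=
  fun x => (A x /\ ~ B x) \/ (B x /\ ~ A x).

Definition is_field {X : Type} (F : (X -> Prop) -> Prop) : Prop :=
  F emptyset /\
  (forall A, F A -> F (compl A)) /\
  (forall A B, F A -> F B -> F (union A B)).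

Definition subadditive {X : Type} (F : (X -> Prop) -> Prop) (mup : (X -> Prop) -> R) :=
  forall A B C, F A -> F B -> F C ->
    (forall x, ind A x <= ind B x + ind C x) -> mup A <= mup B + mup C.

Definition superadditive {X : Type} (F : (X -> Prop) -> Prop) (mum : (X -> Prop) -> R) :=
  forall A B C, F A -> F B -> F C ->
    (forall x, ind A x >= ind B x + ind C x) -> mum A >= mum B + mum C.

Definition co_subadditive {X : Type} (F : (X -> Prop) -> Prop) (mum mup : (X -> Prop) -> R) :=
  forall A B C, F A -> F B -> F C ->
    (forall x, ind A x <= ind B x + ind C x) -> mum A <= mum B + mup C.

Definition co_superadditive {X : Type} (F : (X -> Prop) -> Prop) (mup mum : (X -> Prop) -> R) :=
  forall A B C, F A -> F B -> F C ->
    (forall x, ind A x >= ind B x + ind C x) -> mup A >= mup B + mum C.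

Definition normalized_setfun {X : Type} (F : (X -> Prop) -> Prop) (mu : (X -> Prop) -> R) :=
  (forall A, F A -> 0 <= mu A <= 1) /\ mu emptyset = 0 /\ mu fullset = 1.

Definition conjugate_pair {X : Type} (F : (X -> Prop) -> Prop) (mup mum : (X -> Prop) -> R) :=
  normalized_setfun F mup /\ normalized_setfun F mum /\
  subadditive F mup /\ superadditive F mum /\
  co_subadditive F mum mup /\ co_superadditive F mup mum.

Definition dmu {X : Type} (mup : (X -> Prop) -> R) (A B : X -> Prop) : R := mup (symdiff A B).

Definition complete_pseudo {T : Type} (E : T -> Prop) (d : T -> T -> R) : Prop :=
  forall a : nat -> T, (forall n, E (a n)) ->
    (forall eps, eps > 0 -> exists N, forall m n, (N <= m)%nat -> (N <= n)%nat -> d (a m) (a n) < eps) ->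
    exists A, E A /\
      forall eps, eps > 0 -> exists N, forall n, (N <= n)%nat -> d (a n) A < eps.

Definition union_ij {X : Type} (A : nat -> X -> Prop) (i j : nat) : X -> Prop :=
  fun x => exists k, (i <= k <= j)%nat /\ A k x.

(* convergence of a real net indexed by {(i,j) : i <= j} with the product order *)
Definition net_cvg (f : nat -> nat -> R) (L : R) : Prop :=
  forall eps, eps > 0 -> exists i0 j0, (i0 <= j0)%nat /\
    forall i j, (i0 <= i)%nat -> (j0 <= j)%nat -> (i <= j)%nat -> Rabs (f i j - L) < eps.

Definition net_cvg_d {T : Type} (d : T -> T -> R) (f : nat -> nat -> T) (A : T) : Prop :=
  forall eps, eps > 0 -> exists i0 j0, (i0 <= j0)%nat /\
    forall i j, (i0 <= i)%nat -> (j0 <= j)%nat -> (i <= j)%nat -> d (f i j) A < eps.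

(* Main.v *)
From Stdlib Require Import Reals Lra Lia Classical ClassicalEpsilon FunctionalExtensionality PropExtensionality.
Require Import Defs.
Open Scope R_scope.

Lemma ind_le3 {X : Type} (A B C : X -> Prop) :
  (forall x, A x -> B x \/ C x) -> forall x, ind A x <= ind B x + ind C x.
Proof.
  intros H x; unfold ind.
  destruct (excluded_middle_informative (A x)) as [ha|ha];
  destruct (excluded_middle_informative (B x)) as [hb|hb];
  destruct (excluded_middle_informative (C x)) as [hc|hc]; try lra.
  destruct (H x ha); contradiction.
Qed.

Lemma ind_ge3 {X : Type} (A B C : X -> Prop) :
  (forall x, B x -> A x) -> (forall x, C x -> A x) -> (forall x, B x -> C x -> False) ->
  forall x, ind A x >= ind B x + ind C x.
Proof.
  intros H1 H2 H3 x; unfold ind.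
  destruct (excluded_middle_informative (A x)) as [ha|ha];
  destruct (excluded_middle_informative (B x)) as [hb|hb];
  destruct (excluded_middle_informative (C x)) as [hc|hc]; try lra;
  exfalso; eauto.
Qed.

Lemma F_diff {X : Type} (F : (X -> Prop) -> Prop) (hF : is_field F) A B :
  F A -> F B -> F (fun x => A x /\ ~ B x).
Proof.
  intros hA hB. destruct hF as [h0 [hc hu]].
  replace (fun x => A x /\ ~ B x) with (compl (union (compl A) B)).
  - apply hc, hu; auto.
  - extensionality x; apply propositional_extensionality; unfold compl, union.
    split.
    + intro h; split; [apply NNPP; intro; apply h; left; auto | intro; apply h; right; auto].
    + intros [h1 h2] [h|h]; tauto.
Qed.

Lemma F_sym {X : Type} (F : (X -> Prop) -> Prop) (hF : is_field F) A B :
  F A -> F B -> F (symdiff A B).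
Proof.
  intros hA hB. change (F (union (fun x => A x /\ ~ B x) (fun x => B x /\ ~ A x))).
  pose proof hF as [h0 [hc hu]].
  apply hu; apply F_diff; auto.
Qed.

Lemma F_U {X : Type} (F : (X -> Prop) -> Prop) (hF : is_field F) (A : nat -> X -> Prop) :
  (forall k, F (A k)) -> forall i j, F (union_ij A i j).
Proof.
  intros hA i j. destruct hF as [h0 [hc hu]].
  induction j as [|j IH].
  - destruct (Nat.eq_dec i 0) as [->|ne].
    + replace (union_ij A 0 0) with (A 0%nat); auto.
      extensionality x; apply propositional_extensionality; unfold union_ij; split.
      * intro; exists 0%nat; split; [lia|auto].
      * intros [k [hk h]]; replace 0%nat with k by lia; auto.
    + replace (union_ij A i 0) with (@emptyset X); auto.
      extensionality x; apply propositional_extensionality; unfold union_ij, emptyset; split.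
      * tauto.
      * intros [k [hk h]]; lia.
  - destruct (Compare_dec.le_lt_dec i (S j)) as [le|lt].
    + replace (union_ij A i (S j)) with (union (union_ij A i j) (A (S j))); auto.
      extensionality x; apply propositional_extensionality; unfold union_ij, union; split.
      * intros [[k [hk h]]|h]; [exists k; split; [lia|auto] | exists (S j); split; [lia|auto]].
      * intros [k [hk h]]. destruct (Nat.eq_dec k (S j)) as [->|ne]; [right; auto|left; exists k; split; [lia|auto]].
    + replace (union_ij A i (S j)) with (@emptyset X); auto.
      extensionality x; apply propositional_extensionality; unfold union_ij, emptyset; split.
      * tauto.
      * intros [k [hk h]]; lia.
Qed.

Lemma U_nn {X : Type} (A : nat -> X -> Prop) n : union_ij A n n = A n.
Proof.
  extensionality x; apply propositional_extensionality; unfold union_ij; split.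
  - intros [k [hk h]]; replace n with k by lia; auto.
  - intro; exists n; split; [lia|auto].
Qed.

Lemma F_empty {X : Type} (F : (X -> Prop) -> Prop) (hF : is_field F) : F emptyset.
Proof. destruct hF; auto. Qed.

Lemma mono_p {X : Type} F (mup mum : (X -> Prop) -> R) (hF : is_field F)
  (hconj : conjugate_pair F mup mum) A B :
  F A -> F B -> (forall x, A x -> B x) -> mup A <= mup B.
Proof.
  destruct hconj as [[hp01 [hp0 hp1]] [[hm01 [hm0 hm1]] [hsub [hsup [hcsub hcsup]]]]].
  intros hA hB h.
  pose proof (hsub A B emptyset hA hB (F_empty F hF) (ind_le3 _ _ _ (fun x hx => or_introl (h x hx)))).
  lra.
Qed.

Lemma mono_m {X : Type} F (mup mum : (X -> Prop) -> R) (hF : is_field F)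
  (hconj : conjugate_pair F mup mum) A B :
  F A -> F B -> (forall x, A x -> B x) -> mum A <= mum B.
Proof.
  destruct hconj as [[hp01 [hp0 hp1]] [[hm01 [hm0 hm1]] [hsub [hsup [hcsub hcsup]]]]].
  intros hA hB h.
  pose proof (hsup B A emptyset hB hA (F_empty F hF) (ind_ge3 _ _ _ h (fun x (hx : emptyset x) => False_ind _ hx) (fun x _ (hx : emptyset x) => hx))).
  lra.
Qed.

Lemma mum_le_mup {X : Type} F (mup mum : (X -> Prop) -> R) (hF : is_field F)
  (hconj : conjugate_pair F mup mum) A : F A -> mum A <= mup A.
Proof.
  destruct hconj as [[hp01 [hp0 hp1]] [[hm01 [hm0 hm1]] [hsub [hsup [hcsub hcsup]]]]].
  intros hA.
  pose proof (hcsub A emptyset A hA (F_empty F hF) hA (ind_le3 _ _ _ (fun x hx => or_intror hx))).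
  lra.
Qed.

Lemma sub3 {X : Type} F (mup mum : (X -> Prop) -> R)
  (hconj : conjugate_pair F mup mum) A B C :
  F A -> F B -> F C -> (forall x, A x -> B x \/ C x) -> mup A <= mup B + mup C.
Proof.
  destruct hconj as [[hp01 [hp0 hp1]] [[hm01 [hm0 hm1]] [hsub [hsup [hcsub hcsup]]]]].
  intros; apply hsub; auto; apply ind_le3; auto.
Qed.

Lemma diff_bound {X : Type} F (mup mum : (X -> Prop) -> R) (hF : is_field F)
  (hconj : conjugate_pair F mup mum) P Q :
  F P -> F Q -> (forall x, Q x -> P x) -> mup (fun x => P x /\ ~ Q x) <= mup P - mum Q.
Proof.
  destruct hconj as [[hp01 [hp0 hp1]] [[hm01 [hm0 hm1]] [hsub [hsup [hcsub hcsup]]]]].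
  intros hP hQ h.
  pose proof (hcsup P (fun x => P x /\ ~ Q x) Q hP (F_diff F hF P Q hP hQ) hQ
     (ind_ge3 _ _ _ (fun x hx => proj1 hx) h (fun x h1 h2 => proj2 h1 h2))).
  lra.
Qed.

Lemma tri {X : Type} F (mup mum : (X -> Prop) -> R) (hF : is_field F)
  (hconj : conjugate_pair F mup mum) A B C :
  F A -> F B -> F C -> dmu mup A C <= dmu mup A B + dmu mup B C.
Proof.
  intros; unfold dmu; apply (sub3 F mup mum); auto; try (apply F_sym; auto; fail).
  intros x; unfold symdiff; destruct (classic (B x)); tauto.
Qed.

Lemma mup_d1 {X : Type} F (mup mum : (X -> Prop) -> R) (hF : is_field F)
  (hconj : conjugate_pair F mup mum) A B :
  F A -> F B -> mup A <= mup B + dmu mup A B.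
Proof.
  intros; unfold dmu; apply (sub3 F mup mum); auto; try (apply F_sym; auto; fail).
  intros x; unfold symdiff; destruct (classic (B x)); tauto.
Qed.

Lemma mup_d2 {X : Type} F (mup mum : (X -> Prop) -> R) (hF : is_field F)
  (hconj : conjugate_pair F mup mum) A B :
  F A -> F B -> mup B <= mup A + dmu mup A B.
Proof.
  intros; unfold dmu; apply (sub3 F mup mum); auto; try (apply F_sym; auto; fail).
  intros x; unfold symdiff; destruct (classic (A x)); tauto.
Qed.

Lemma half_pow_mono n m : (1/2)^(n+m) <= (1/2)^n.
Proof.
  induction m as [|m IH].
  - rewrite Nat.add_0_r; lra.
  - replace (n + S m)%nat with (S (n+m)) by lia. simpl.
    assert (0 <= (1/2)^(n+m)) by (apply pow_le; lra). lra.
Qed.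

Lemma half_pow_small e : e > 0 -> exists K, (1/2)^K < e.
Proof.
  intros he. destruct (pow_lt_1_zero (1/2) ltac:(rewrite Rabs_pos_eq; lra) e he) as [K HK].
  exists K. specialize (HK K (le_n K)). rewrite Rabs_pos_eq in HK; auto. apply pow_le; lra.
Qed.

Fixpoint phi_of (f : nat -> nat) (k : nat) : nat :=
  match k with 0 => f 0%nat | S k' => S (Nat.max (phi_of f k') (f (S k'))) end.

Lemma phi_ge_f f k : (f k <= phi_of f k)%nat.
Proof. destruct k; simpl; lia. Qed.
Lemma phi_ge_k f k : (k <= phi_of f k)%nat.
Proof. induction k; simpl; lia. Qed.
Lemma phi_step f k : (phi_of f k <= phi_of f (S k))%nat.
Proof. simpl; lia. Qed.

Theorem theorem3p3 (X : Type) (F E : (X -> Prop) -> Prop)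
  (mup mum : (X -> Prop) -> R)
  (hF : is_field F) (hEF : forall A, E A -> F A)
  (hconj : conjugate_pair F mup mum)
  (hE : forall A, E A -> mup A = mum A) :
  complete_pseudo E (dmu mup) <->
  (forall A : nat -> X -> Prop, (forall i, E (A i)) ->
     forall L : R,
       net_cvg (fun i j => mup (union_ij A i j)) L ->
       net_cvg (fun i j => mum (union_ij A i j)) L ->
       exists B, E B /\ net_cvg_d (dmu mup) (union_ij A) B /\ mup B = L).
Proof.
  split.
  - intros hc A hA L hp hm.
    assert (hFA : forall k, F (A k)) by (intros; apply hEF, hA).
    assert (hcauchy : forall eps, eps > 0 -> exists N, forall m n, (N <= m)%nat -> (N <= n)%nat ->
              dmu mup (A m) (A n) < eps).
    { intros eps he.
      destruct (hp (eps/4) ltac:(lra)) as [i1 [j1 [_ H1]]].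
      destruct (hm (eps/4) ltac:(lra)) as [i2 [j2 [_ H2]]].
      exists (Nat.max (Nat.max i1 j1) (Nat.max i2 j2)). intros m n hmN hnN.
      set (P := union_ij A (Nat.min m n) (Nat.max m n)).
      assert (hFP : F P) by (apply F_U; auto).
      assert (hmP : forall x, A m x -> P x) by (intros x h; exists m; split; [lia|auto]).
      assert (hnP : forall x, A n x -> P x) by (intros x h; exists n; split; [lia|auto]).
      pose proof (H1 (Nat.min m n) (Nat.max m n) ltac:(lia) ltac:(lia) ltac:(lia)) as e1.
      cbv beta in e1; fold P in e1.
      pose proof (H2 m m ltac:(lia) ltac:(lia) ltac:(lia)) as e2. cbv beta in e2; rewrite U_nn in e2.
      pose proof (H2 n n ltac:(lia) ltac:(lia) ltac:(lia)) as e3. cbv beta in e3; rewrite U_nn in e3.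
      pose proof (diff_bound F mup mum hF hconj P (A m) hFP (hFA m) hmP).
      pose proof (diff_bound F mup mum hF hconj P (A n) hFP (hFA n) hnP).
      assert (dmu mup (A m) (A n) <= mup (fun x => P x /\ ~ A m x) + mup (fun x => P x /\ ~ A n x)).
      { unfold dmu; apply (sub3 F mup mum hconj); auto; try (apply F_sym; auto; fail); try (apply F_diff; auto; fail).
        intros x; unfold symdiff; intros [[h1 h2]|[h1 h2]]; [right|left]; split; auto. }
      apply Rabs_def2 in e1. apply Rabs_def2 in e2. apply Rabs_def2 in e3. lra. }
    destruct (hc A hA hcauchy) as [B [hB hBc]].
    exists B; split; auto; split.
    + intros eps he.
      destruct (hp (eps/4) ltac:(lra)) as [i1 [j1 [_ H1]]].
      destruct (hm (eps/4) ltac:(lra)) as [i2 [j2 [_ H2]]].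
      destruct (hBc (eps/2) ltac:(lra)) as [NB HB].
      set (N := Nat.max (Nat.max (Nat.max i1 j1) (Nat.max i2 j2)) NB).
      exists N, N. split; [lia|]. intros i j hi hj hij.
      pose proof (tri F mup mum hF hconj (union_ij A i j) (A j) B (F_U F hF A hFA i j) (hFA j) (hEF B hB)).
      assert (hjU : forall x, A j x -> union_ij A i j x) by (intros x h; exists j; split; [lia|auto]).
      assert (dmu mup (union_ij A i j) (A j) <= mup (union_ij A i j) - mum (A j)).
      { eapply Rle_trans; [|apply (diff_bound F mup mum hF hconj); auto; apply F_U; auto].
        unfold dmu; apply (mono_p F mup mum hF hconj); auto; try (apply F_sym; auto; apply F_U; auto; fail);
          try (apply F_diff; auto; apply F_U; auto; fail).
        all: intros x; unfold symdiff; intros [h|[h1 h2]]; auto; exfalso; auto. }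
      pose proof (H1 i j ltac:(lia) ltac:(lia) ltac:(lia)) as e1. cbv beta in e1.
      pose proof (H2 j j ltac:(lia) ltac:(lia) ltac:(lia)) as e2. cbv beta in e2; rewrite U_nn in e2.
      pose proof (HB j ltac:(lia)).
      apply Rabs_def2 in e1. apply Rabs_def2 in e2. lra.
    + assert (forall eps, eps > 0 -> Rabs (mup B - L) < eps).
      { intros eps he.
        destruct (hp (eps/2) ltac:(lra)) as [i1 [j1 [_ H1]]].
        destruct (hBc (eps/2) ltac:(lra)) as [NB HB].
        set (n := Nat.max (Nat.max i1 j1) NB).
        pose proof (H1 n n ltac:(lia) ltac:(lia) ltac:(lia)) as e1. cbv beta in e1; rewrite U_nn in e1.
        pose proof (HB n ltac:(lia)).
        pose proof (mup_d1 F mup mum hF hconj (A n) B (hFA n) (hEF B hB)).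
        pose proof (mup_d2 F mup mum hF hconj (A n) B (hFA n) (hEF B hB)).
        apply Rabs_def2 in e1. apply Rabs_def1; lra. }
      destruct (Req_dec (mup B) L) as [e|ne]; auto. exfalso.
      assert (Rabs (mup B - L) > 0) by (apply Rabs_pos_lt; lra).
      specialize (H _ H0). lra.
  - intros hcond a ha hc.
    assert (hFa : forall k, F (a k)) by (intros; apply hEF, ha).
    assert (hcc : Cauchy_crit (fun n => mup (a n))).
    { intros eps he. destruct (hc eps he) as [N HN]. exists N. intros n m hn hm.
      pose proof (HN n m hn hm).
      pose proof (mup_d1 F mup mum hF hconj (a n) (a m) (hFa n) (hFa m)).
      pose proof (mup_d2 F mup mum hF hconj (a n) (a m) (hFa n) (hFa m)).
      unfold Rdist; apply Rabs_def1; lra. }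
    destruct (R_complete _ hcc) as [L HL].
    assert (hN : forall k, exists N, forall m n, (N <= m)%nat -> (N <= n)%nat ->
                   dmu mup (a m) (a n) < (1/2)^(S k)).
    { intros k; apply hc. apply pow_lt; lra. }
    destruct (choice _ hN) as [Nf hNf].
    set (phi := phi_of Nf).
    set (b := fun k => a (phi k)).
    assert (hb : forall k, E (b k)) by (intros; apply ha).
    assert (hFb : forall k, F (b k)) by (intros; apply hFa).
    assert (hstep : forall k, dmu mup (b k) (b (S k)) < (1/2)^(S k)).
    { intros k. apply hNf; unfold phi.
      - apply phi_ge_f.
      - pose proof (phi_ge_f Nf k); pose proof (phi_step Nf k); lia. }
    assert (key : forall i t, mup (union_ij b i (i+t)) <= mup (b i) + (1/2)^i - (1/2)^(i+t)).
    { intros i t; induction t as [|t IH].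
      - rewrite Nat.add_0_r, U_nn; lra.
      - replace (i + S t)%nat with (S (i+t)) by lia.
        pose proof (sub3 F mup mum hconj (union_ij b i (S (i+t))) (union_ij b i (i+t))
                      (symdiff (b (i+t)%nat) (b (S (i+t))))
                      (F_U F hF b hFb _ _) (F_U F hF b hFb _ _) (F_sym F hF _ _ (hFb _) (hFb _))).
        assert (hinc : forall x, union_ij b i (S (i + t)) x ->
                  union_ij b i (i + t) x \/ symdiff (b (i + t)%nat) (b (S (i + t))) x).
        { intros x [k [hk h]]. destruct (Nat.eq_dec k (S (i+t))) as [->|ne].
          - destruct (classic (b (i+t)%nat x)).
            + left; exists (i+t)%nat; split; [lia|auto].
            + right; right; split; auto.
          - left; exists k; split; [lia|auto]. }
        specialize (H hinc). pose proof (hstep (i+t)%nat). unfold dmu in H0.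
        simpl pow in *. lra. }
    assert (hnets : forall eps, eps > 0 -> exists K, forall i j, (K <= i)%nat -> (i <= j)%nat ->
              Rabs (mup (union_ij b i j) - L) < eps /\ Rabs (mum (union_ij b i j) - L) < eps).
    { intros eps he.
      destruct (half_pow_small (eps/2) ltac:(lra)) as [K1 HK1].
      destruct (HL (eps/2) ltac:(lra)) as [K2 HK2].
      exists (Nat.max K1 K2). intros i j hi hij.
      pose proof (key i (j - i)%nat) as k1. replace (i + (j - i))%nat with j in k1 by lia.
      assert (hbU : forall x, b i x -> union_ij b i j x) by (intros x h; exists i; split; [lia|auto]).
      pose proof (mono_m F mup mum hF hconj (b i) (union_ij b i j) (hFb i) (F_U F hF b hFb i j) hbU).
      pose proof (mum_le_mup F mup mum hF hconj (union_ij b i j) (F_U F hF b hFb i j)).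
      pose proof (hE (b i) (hb i)).
      pose proof (half_pow_mono K1 (i - K1)) as hpm. replace (K1 + (i - K1))%nat with i in hpm by lia.
      pose proof (pow_le (1/2) j ltac:(lra)).
      pose proof (HK2 (phi i) ltac:(pose proof (phi_ge_k Nf i); unfold phi; lia)) as e.
      unfold Rdist in e. apply Rabs_def2 in e. fold (b i) in e.
      split; apply Rabs_def1; lra. }
    assert (hnp : net_cvg (fun i j => mup (union_ij b i j)) L).
    { intros eps he. destruct (hnets eps he) as [K HK]. exists K, K; split; [lia|].
      intros i j hi hj hij; apply (HK i j hi hij). }
    assert (hnm : net_cvg (fun i j => mum (union_ij b i j)) L).
    { intros eps he. destruct (hnets eps he) as [K HK]. exists K, K; split; [lia|].
      intros i j hi hj hij; apply (HK i j hi hij). }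
    destruct (hcond b hb L hnp hnm) as [B [hB [hnet hBL]]].
    exists B; split; auto.
    intros eps he.
    destruct (half_pow_small (eps/2) ltac:(lra)) as [K1 HK1].
    destruct (hnet (eps/2) ltac:(lra)) as [i0 [j0 [_ Hn]]].
    set (k := Nat.max K1 (Nat.max i0 j0)).
    pose proof (Hn k k ltac:(lia) ltac:(lia) ltac:(lia)) as e1. rewrite U_nn in e1.
    exists (phi k). intros n hn.
    pose proof (tri F mup mum hF hconj (a n) (b k) B (hFa n) (hFb k) (hEF B hB)).
    pose proof (hNf k n (phi k) ltac:(pose proof (phi_ge_f Nf k); unfold phi in *; lia)
                  ltac:(apply phi_ge_f)) as e2.
    pose proof (half_pow_mono K1 (k - K1)) as hpm. replace (K1 + (k - K1))%nat with k in hpm by lia.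
    pose proof (pow_le (1/2) k ltac:(lra)).
    simpl pow in e2. fold (b k) in e2. lra.
Qed.
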